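(* Let $t,q\ge 1$ and $s_1,\dots,s_t\ge 2$ be integers, and let $G^*=K_1\vee (C_{s_1}\cup\cdots\cup C_{s_t}\cup qK_2)$, where $C_2$ denotes a digon (two parallel edges between the same two vertices). If $n$ is the number of vertices of $G^*$, then the largest $Q$-eigenvalue $\sigma_1(G^* )$ equals the largest root of $\lambda^3-(n+7)\lambda^2+(7n+8)\lambda-12n+4q+12$.
   Context: Multigraphs without loops are allowed: the degree of a vertex is the number of edges incident to it, and the $(u,v)$ entry of the adjacency matrix $A$ is the number of edges joining $u$ and $v$. $Q=A+D$ with $D$ the diagonal degree matrix; $\sigma_1$ denotes its largest eigenvalue. $K_1\vee H$ adds one vertex adjacent (by a single edge) to every vertex of $H$; $\cup$ is disjoint union; $qK_2$ is $q$ disjoint edges. *)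

(* Defs.v *)
From HB Require Import structures.
From mathcomp Require Import all_boot all_order all_algebra.
Set Implicit Arguments. Unset Strict Implicit. Unset Printing Implicit Defensive.
Import Order.TTheory GRing.Theory Num.Theory.
Local Open Scope ring_scope.

(* Vertex type of G* = K_1 v (C_{s_1} u ... u C_{s_t} u q K_2):
   None = the apex vertex of K_1;
   Some (inl (Tagged i j)) = vertex j of the cycle C_{s_i};
   Some (inr (p, b)) = endpoint b of the p-th copy of K_2. *)
Definition Gstar_vert (t : nat) (s : 'I_t -> nat) (q : nat) : finType :=
  option ({i : 'I_t & 'I_(s i)} + ('I_q * bool)).

(* number of edges of the cycle C_m (edges {k, k+1 mod m}, k < m) joining j and j';
   for m = 2 this gives the digon (two parallel edges). *)
Definition cyc_mult (m : nat) (j j' : 'I_m) : nat :=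
  #|[set k : 'I_m | ((val j == val k) && (val j' == ((val k).+1 %% m)%N))
                   || ((val j' == val k) && (val j == ((val k).+1 %% m)%N))]|.

Definition Gstar_adj (t : nat) (s : 'I_t -> nat) (q : nat)
  (u v : Gstar_vert s q) : nat :=
  match u, v with
  | None, None => 0
  | None, Some _ => 1
  | Some _, None => 1
  | Some (inl (existT i j)), Some (inl (existT i' j')) =>
      if i =P i' is ReflectT e then
        cyc_mult (ecast k 'I_(s k) e j) j'
      else 0
  | Some (inr (p, b)), Some (inr (p', b')) => ((p == p') && (b != b'))%N
  | _, _ => 0
  end.

Definition adjmx (R : nzRingType) (V : finType) (a : V -> V -> nat) : 'M[R]_#|V| :=
  \matrix_(i, j) (a (enum_val i) (enum_val j))%:R.
Definition degmx (R : nzRingType) (V : finType) (a : V -> V -> nat) : 'M[R]_#|V| :=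
  diag_mx (\row_i (\sum_(v : V) a (enum_val i) v)%:R).

Definition Qmx (R : nzRingType) (V : finType) (a : V -> V -> nat) : 'M[R]_#|V| :=
  adjmx R a + degmx R a.

Definition largest_eigenvalue {F : realFieldType} (n : nat) (M : 'M[F]_n) (x : F) : Prop :=
  eigenvalue M x /\ (forall y, eigenvalue M y -> y <= x).

Definition largest_root {F : realFieldType} (p : {poly F}) (x : F) : Prop :=
  root p x /\ (forall y, root p y -> y <= x).
Arguments adjmx R {V} a.
Arguments degmx R {V} a.
Arguments Qmx R {V} a.

(* Main.v *)
Require Import Defs.
From HB Require Import structures.
From mathcomp Require Import all_boot all_order all_algebra.
From mathcomp Require Import zify ring lra.
Import Order.TTheory GRing.Theory Num.Theory.
Local Open Scope ring_scope.

Lemma big_opt (R : nmodType) (T : finType) (F : option T -> R) :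
  \sum_(u : option T) F u = F None + \sum_(x : T) F (Some x).
Proof.
by rewrite ![index_enum _]unlock [@Finite.enum in LHS]unlock/= big_cons big_map.
Qed.

Lemma collatz (R : realFieldType) n (Q : 'M[R]_n) (z x : 'rV[R]_n) (rho mu : R) :
  (forall i j, 0 <= Q i j) -> (forall i, 0 < z 0 i) ->
  z *m Q = rho *: z -> x *m Q = mu *: x -> x != 0 -> mu <= rho.
Proof.
move=> Q0 z0 hz hx /rV0Pn [i0 xi0].
pose F := fun j => `|x 0 j| / z 0 j.
have [j _ Hj] := @real_arg_maxP R _ i0 predT F isT (fun i _ => num_real (F i)).
set m := F j in Hj.
have le_m : forall i, `|x 0 i| <= m * z 0 i.
  by move=> k; have := Hj k isT; rewrite /= /F ler_pdivrMr.
have mpos : 0 < m.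
  have := Hj i0 isT; rewrite -/m.
  by apply: lt_le_trans; rewrite divr_gt0 // normr_gt0.
have xj : `|x 0 j| = m * z 0 j by rewrite /m /F divfK // gt_eqF.
have xjpos : 0 < `|x 0 j| by rewrite xj mulr_gt0.
have ex : forall (v : 'rV[R]_n) c, v *m Q = c *: v -> \sum_i v 0 i * Q i j = c * v 0 j.
  by move=> v c /matrixP/(_ 0 j); rewrite !mxE.
have h1 : `|mu| * `|x 0 j| <= rho * `|x 0 j|.
  rewrite -normrM -(ex x mu hx).
  apply: (le_trans (ler_norm_sum _ _ _)).
  apply: (@le_trans _ _ (\sum_i m * (z 0 i * Q i j))).
    apply: ler_sum => i _; rewrite normrM (ger0_norm (Q0 _ _)) mulrA.
    by apply: ler_wpM2r => //.
  by rewrite -mulr_sumr (ex z rho hz) xj mulrCA.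
rewrite -(ler_pM2r xjpos); apply: le_trans h1.
by rewrite ler_pM2r // real_ler_norm ?num_real.
Qed.

Section G.
Variables (t q : nat) (s : 'I_t -> nat).
Local Notation V := (Gstar_vert s q).
Local Notation adj := (@Gstar_adj t s q).

Lemma ordS_neq m (k : 'I_m) : (1 < m)%N -> (ordS k != k).
Proof.
move=> m1; apply/eqP => /(congr1 val) /=; case: k => k hk /=.
case: (ltngtP k.+1 m) => h.
- by rewrite modn_small //; lia.
- by lia.
- by rewrite h modnn; lia.
Qed.

Arguments ordS_neq {m}.

Lemma cyc_multE m (j j' : 'I_m) : (1 < m)%N ->
  cyc_mult j j' = ((j' == ordS j) + (j == ordS j'))%N.
Proof.
move=> m1; rewrite /cyc_mult -sum1_card.
transitivity (\sum_k ((j == k) && (j' == ordS k)) + \sum_k ((j' == k) && (j == ordS k)))%N.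
  rewrite -big_split big_mkcond; apply: eq_bigr => k _; rewrite inE.
  have E1 : forall a b : 'I_m, (val a == val b) = (a == b) by [].
  have E2 : forall a : 'I_m, (val a == (val k).+1 %% m)%N = (a == ordS k) by [].
  rewrite !E2 !E1.
  case: (boolP (j' == k)) => [/eqP->|_].
    by rewrite [k == ordS k]eq_sym (negbTE (ordS_neq k m1)) andbF /=; case: (_ == _).
  by rewrite /= orbF addn0; case: (_ && _).
congr (_ + _)%N.
  rewrite (bigD1 j) //= eqxx big1 ?addn0 // => k.
  by rewrite eq_sym => /negbTE ->.
rewrite (bigD1 j') //= eqxx big1 ?addn0 // => k.
by rewrite eq_sym => /negbTE ->.
Qed.

Lemma cyc_row m (j : 'I_m) : (1 < m)%N -> (\sum_j' cyc_mult j j' = 2)%N.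
Proof.
move=> m1; under eq_bigr do rewrite cyc_multE //.
rewrite big_split /= -[2%N]/(1 + 1)%N; congr (_ + _)%N.
  rewrite (bigD1 (ordS j)) //= eqxx big1 // => k.
  by move=> /negbTE ->.
transitivity (\sum_(k < m) (j == k : nat))%N.
  by rewrite [RHS](reindex_inj (@ordS_inj m)).
rewrite (bigD1 j) //= eqxx big1 // => k.
by rewrite eq_sym => /negbTE ->.
Qed.

Lemma cyc_mult_sym m (j j' : 'I_m) : cyc_mult j j' = cyc_mult j' j.
Proof. by rewrite /cyc_mult; apply: eq_card => k; rewrite !inE orbC. Qed.

Lemma adj_sym (u v : V) : adj u v = adj v u.
Proof.
case: u => [[[i j]|[p b]]|]; case: v => [[[i' j']|[p' b']]|] //=.
  case: (i =P i') => [e|ne]; case: (i' =P i) => [e'|ne'] //.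
  - subst i'; rewrite (eq_irrelevance e' erefl) /=.
    exact: cyc_mult_sym.
  - by case: ne'; rewrite e.
  - by case: ne; rewrite e'.
by rewrite eq_sym (eq_sym b).
Qed.

Hypothesis hs : forall i, (2 <= s i)%N.

Lemma cyc_sum i (j : 'I_(s i)) :
  (\sum_(x : {i : 'I_t & 'I_(s i)}) adj (Some (inl (existT _ i j))) (Some (inl x)) = 2)%N.
Proof.
transitivity (\sum_(i' < t) \sum_(j' : 'I_(s i')) adj (Some (inl (existT _ i j))) (Some (inl (existT _ i' j'))))%N.
  rewrite sig_big_dep /=; apply: eq_bigr => -[i' j'] _; done.
rewrite (bigD1 i) //= [X in (_ + X)%N]big1 ?addn0.
  case: (i =P i) => [e|//]; rewrite (eq_irrelevance e erefl) /=.
  exact: cyc_row.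
move=> i' ne; apply: big1 => j' _ /=.
case: (i =P i') => [e|//]; exfalso; by move/negP: ne; apply; rewrite e.
Qed.

Lemma k2_sum p b : (\sum_(x : 'I_q * bool) adj (Some (inr (p,b))) (Some (inr x)) = 1)%N.
Proof.
rewrite (bigD1 (p, ~~ b)) //= eqxx /= big1 ?addn0; first by case: b.
move=> [p' b']; rewrite xpair_eqE /=.
case: (p =P p') => [<-|] //=; rewrite eqxx /=.
by case: b; case: b'.
Qed.

Arguments Gstar_adj : simpl never.

Definition wt {R : nmodType} (a b c : R) (u : V) : R :=
  match u with None => a | Some (inl _) => b | Some (inr _) => c end.

Lemma wsum (R : pzSemiRingType) (a b c : R) (v : V) :
  \sum_u wt a b c u * (adj v u)%:R =
  match v with
  | None => b *+ #|{: {i : 'I_t & 'I_(s i)}}| + c *+ (q * 2)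
  | Some (inl _) => a + b *+ 2
  | Some (inr _) => a + c end.
Proof.
rewrite big_opt big_sumType /= -!mulr_sumr -!natr_sum.
case: v => [[[i j]|[p b0]]|].
- have -> : (\sum_(x : 'I_q * bool) adj (Some (inl (existT _ i j))) (Some (inr x)) = 0)%N.
    by apply: big1 => -[? ?] _.
  rewrite cyc_sum.
  by rewrite [adj _ None]/Gstar_adj mulr1 mulr0 addr0 mulr_natr.
- have -> : (\sum_x adj (Some (inr (p, b0))) (Some (inl x)) = 0)%N.
    by apply: big1 => -[? ?] _.
  rewrite k2_sum.
  by rewrite [adj _ None]/Gstar_adj !mulr1 mulr0 add0r.
- rewrite [adj None None]/Gstar_adj mulr0 add0r.
  rewrite (eq_bigr (fun _ => 1%N)) // sum1_card (eq_bigr (fun _ => 1%N)) // sum1_card.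
  by rewrite !mulr_natr card_prod card_ord card_bool.
Qed.

Lemma wsumN (R : pzSemiRingType) (a b c : R) :
  \sum_u wt a b c u * (adj None u)%:R = b *+ #|{: {i : 'I_t & 'I_(s i)}}| + c *+ (q * 2).
Proof. exact: wsum. Qed.
Lemma wsumL (R : pzSemiRingType) (a b c : R) x :
  \sum_u wt a b c u * (adj (Some (inl x)) u)%:R = a + b *+ 2.
Proof. exact: wsum. Qed.
Lemma wsumR (R : pzSemiRingType) (a b c : R) x :
  \sum_u wt a b c u * (adj (Some (inr x)) u)%:R = a + c.
Proof. exact: wsum. Qed.
Lemma wtN (R : nmodType) (a b c : R) : wt a b c None = a. Proof. by []. Qed.
Lemma wtL (R : nmodType) (a b c : R) x : wt a b c (Some (inl x)) = b. Proof. by []. Qed.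
Lemma wtR (R : nmodType) (a b c : R) x : wt a b c (Some (inr x)) = c. Proof. by []. Qed.

Definition deg (v : V) := (\sum_u adj v u)%N.

Lemma deg_val (R : pzSemiRingType) (v : V) :
  (deg v)%:R = \sum_u wt (1 : R) 1 1 u * (adj v u)%:R.
Proof. by rewrite /deg natr_sum; apply: eq_bigr => -[[?|?]|] _; rewrite mul1r. Qed.

Definition zv {R : nzRingType} (a b c : R) : 'rV[R]_#|V| := \row_i wt a b c (enum_val i).

Lemma zvQ (R : comNzRingType) (a b c : R) j :
  (zv a b c *m Qmx R adj) 0 j =
     \sum_u wt a b c u * (adj (enum_val j) u)%:R + wt a b c (enum_val j) * (deg (enum_val j))%:R.
Proof.
rewrite !mxE.
under eq_bigr do rewrite !mxE mulrDr.
rewrite big_split /=.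
congr (_ + _).
  rewrite -(big_enum_val (A:=V) (fun u => wt a b c u * (adj u (enum_val j))%:R)).
  by apply: eq_big => // u _; rewrite adj_sym.
rewrite (bigD1 j) //= eqxx mulr1n [X in _ + X]big1 ?addr0 //.
by move=> i /negbTE ->; rewrite mulr0n mulr0.
Qed.


Lemma Q_ge0 (R : numDomainType) i j : 0 <= Qmx R adj i j.
Proof. by rewrite !mxE addr_ge0 ?mulrn_wge0 ?ler0n. Qed.

End G.

Theorem lemma3p3 (R : rcfType) (t q : nat) (s : 'I_t -> nat)
  (ht : (1 <= t)%N) (hq : (1 <= q)%N) (hs : forall i, (2 <= s i)%N) :
  let n := #|Gstar_vert s q| in
  let p : {poly R} :=
    'X^3 - (n + 7)%:R *: 'X^2 + (7 * n + 8)%:R *: 'X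
    + ((4 * q + 12)%:R - (12 * n)%:R)%:P in
  exists sigma1 : R,
    largest_eigenvalue (Qmx R (@Gstar_adj t s q)) sigma1 /\ largest_root p sigma1.
Proof.
move=> n p.
set C := #|{: {i : 'I_t & 'I_(s i)}}|.
have hn : n = (C + q * 2).+1.
  by rewrite /n /Gstar_vert card_option card_sum card_prod card_ord card_bool.
have hC : (0 < C)%N.
  apply/card_gt0P; exists (existT _ (Ordinal ht) (Ordinal (ltnW (hs (Ordinal ht))))).
  by [].
pose Cr : R := C%:R. pose Qr : R := q%:R.
have pE : forall y, p.[y] = y^+3 - (Cr + 2 * Qr + 8) * y^+2 + (7 * (Cr + 2 * Qr + 1) + 8) * y
   + (4 * Qr + 12 - 12 * (Cr + 2 * Qr + 1)).
  move=> y; rewrite /p !(hornerD, hornerN, hornerZ, hornerXn, hornerX, hornerC) hn /Cr /Qr.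
  rewrite -addn1; ring.
pose z (y : R) := zv t q s ((y-5)*(y-3)) (y-3) (y-5).
have zE : forall y, p.[y] = 0 -> z y *m Qmx R (@Gstar_adj t s q) = y *: z y.
  move=> y hy; apply/rowP => j; rewrite zvQ !mxE.
  rewrite deg_val.
  case: (enum_val j) => [[x|x]|].
  - rewrite !(wsumL _ _ _ hs) wtL; ring.
  - rewrite !(wsumR _ _ _ hs) wtR; ring.
  - rewrite !(wsumN _ _ _ hs) wtN -/C.
    rewrite -[(y - 3) *+ C]mulr_natr -[(y-5) *+ (q*2)]mulr_natr natrM -/Cr -/Qr.
    have -> : y * ((y-5)*(y-3)) = y*((y-5)*(y-3)) - p.[y] by rewrite hy subr0.
    rewrite pE; ring.
have p5 : p.[5] = - 2 * Cr by rewrite pE; ring.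
have Cpos : 0 < Cr by rewrite /Cr ltr0n.
have Qpos : 0 <= Qr by rewrite /Qr ler0n.
pose Nr : R := n%:R.
have nr : Nr = Cr + 2 * Qr + 1.
  by rewrite /Nr hn -addn1 (natrD _ (C + q * 2) 1) (natrD _ C (q * 2)) (natrM _ q 2) mulrC.
have n7 : (n + 7)%:R = Nr + 7 :> R by rewrite natrD.
have [r /andP[r5 rn] rootr] : exists2 r, (5 <= r <= (n + 7)%:R) & root p r.
  apply: poly_ivt; first by rewrite n7 nr; lra.
  rewrite p5 n7 pE nr.
  have -> : forall N : R, N = Cr + 2 * Qr + 1 -> (N + 7) ^+ 3 - (Cr + 2 * Qr + 8) * (N + 7) ^+ 2 +
    (7 * (Cr + 2 * Qr + 1) + 8) * (N + 7) + (4 * Qr + 12 - 12 * (Cr + 2 * Qr + 1))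
    = 7 * N ^+ 2 + 45 * N + 68 + 4 * Qr.
    move=> N ->; ring.
    by apply/andP; split; [lra | nra].
  by [].
have hr : p.[r] = 0 by apply/eqP.
have r5' : 5 < r.
  rewrite lt_neqAle r5 andbT; apply/eqP => e.
  by move: hr; rewrite -e p5 => h; clear -h Cpos; lra.
have zpos : forall y, 5 < y -> forall i, 0 < (z y) 0 i.
  move=> y y5 i; rewrite mxE; case: (enum_val i) => [[x|x]|].
  - rewrite wtL; lra.
  - rewrite wtR; lra.
  - rewrite wtN; apply: mulr_gt0; lra.
have zne0 : forall y, 5 < y -> z y != 0.
  move=> y y5; apply/rV0Pn; exists (enum_rank None).
  by rewrite gt_eqF // zpos.
exists r; split.
  split.
    by apply/eigenvalueP; exists (z r); [exact: zE | exact: zne0].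
  move=> y /eigenvalueP [v hv vn0].
  exact: (collatz _ _ _ _ _ _ _ (Q_ge0 t q s R) (zpos r r5') (zE r hr) hv vn0).
split; first by [].
move=> y ry; case: (lerP y 5) => hy; first by apply: le_trans hy (ltW r5').
exact: (collatz _ _ _ _ _ _ _ (Q_ge0 t q s R) (zpos r r5') (zE r hr) (zE y (eqP ry)) (zne0 y hy)).
Qed.
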